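(* A topological space $X$ is set strongly star Menger if and only if every closed subspace of $X$ is strongly star Menger.
   Context: For a family $\mathcal U$ of subsets of $X$ and $A\subseteq X$, $st(A,\mathcal U)=\bigcup\{U\in\mathcal U: U\cap A\neq\emptyset\}$. A space $Y$ is strongly star Menger if for every sequence $(\mathcal U_n:n\in\omega)$ of open covers of $Y$ there are finite sets $F_n\subseteq Y$ with $Y=\bigcup_{n}st(F_n,\mathcal U_n)$. A space $X$ is set strongly star Menger if for every nonempty $A\subseteq X$ and every sequence $(\mathcal U_n:n\in\omega)$ of families of open subsets of $X$ with $\overline A\subseteq\bigcup\mathcal U_n$ for all $n$, there are finite sets $F_n\subseteq\overline A$ ($n\in\omega$) with $A\subseteq\bigcup_{n}st(F_n,\mathcal U_n)$. *)

(* Defs.v *)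
From HB Require Import structures.
From mathcomp Require Import all_boot all_order.
From mathcomp Require Import boolp classical_sets cardinality topology.
Set Implicit Arguments. Unset Strict Implicit. Unset Printing Implicit Defensive.
Local Open Scope classical_set_scope.

Definition star {T : Type} (A : set T) (U : set (set T)) : set T :=
  \bigcup_(V in [set V | U V /\ V `&` A !=set0]) V.

Definition subspace_open_cover {T : topologicalType} (Y : set T)
  (U : set (set T)) : Prop :=
  (forall V, U V -> exists W, open W /\ V = W `&` Y) /\
  Y `<=` \bigcup_(V in U) V.

Definition strongly_star_Menger_subspace {T : topologicalType} (Y : set T) : Prop :=
  forall U : nat -> set (set T), (forall n, subspace_open_cover Y (U n)) ->
  exists F : nat -> set T,
    (forall n, finite_set (F n) /\ F n `<=` Y) /\
    Y `<=` \bigcup_n star (F n) (U n).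

Definition set_strongly_star_Menger (T : topologicalType) : Prop :=
  forall A : set T, A !=set0 ->
  forall U : nat -> set (set T),
    (forall n, (forall V, U n V -> open V) /\ closure A `<=` \bigcup_(V in U n) V) ->
  exists F : nat -> set T,
    (forall n, finite_set (F n) /\ F n `<=` closure A) /\
    A `<=` \bigcup_n star (F n) (U n).

(* Main.v *)
Require Import Defs.
From mathcomp Require Import all_boot all_order.
From mathcomp Require Import boolp classical_sets cardinality topology.
Local Open Scope classical_set_scope.

Theorem proposition2p2 (T : topologicalType) :
  set_strongly_star_Menger T <->
  (forall C : set T, closed C -> strongly_star_Menger_subspace C).
Proof.
split.
- move=> H C cC U HU.
  case: (pselect (C !=set0)) => [C0|C0]; last first.
    exists (fun=> set0); split => [n|x Cx].
      by split; [exact: finite_set0| by []].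
    by exfalso; apply: C0; exists x.
  have clC : closure C = C by rewrite -(proj1 (closure_id C) cC).
  pose U' n := [set W : set T | open W /\ U n (W `&` C)].
  have [|F [HF HC]] := H C C0 U'.
    move=> n; split; first by move=> V [].
    rewrite clC => x Cx; have [_ cov] := HU n.
    have [V UV Vx] := cov x Cx.
    have [W [oW VW]] := (HU n).1 V UV.
    exists W; first by split => //; rewrite -VW.
    by move: Vx; rewrite VW => -[].
  rewrite clC in HF.
  exists F; split => [n|x Cx]; first exact: HF n.
  have [n _ [W [[oW UW] [y [Wy Fy]]] Wx]] := HC x Cx.
  exists n => //; exists (W `&` C) => //; split => //.
  exists y; split => //; split => //; exact: (HF n).2 _ Fy.
- move=> H A A0 U HU.
  pose C := closure A.
  pose U' n := [set V | exists2 W, U n W & V = W `&` C].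
  have [|F [HF HC]] := H C (@closed_closure _ A) U'.
    move=> n; split.
      move=> V [W UW ->]; exists W; split => //; exact: (HU n).1 W UW.
    move=> x Cx; have [W UW Wx] := (HU n).2 x Cx.
    by exists (W `&` C) => //; exists W.
  exists F; split => [n|x Ax]; first exact: HF n.
  have [n _ [V [[W UW VW] [y [Vy Fy]]] Vx]] := HC x (subset_closure Ax).
  rewrite VW in Vy Vx.
  exists n => //; exists W => //; last by case: Vx.
  split => //; exists y; split => //; by case: Vy.
Qed.
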